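(* Let $q \ge 2$ and $n \ge 1$ be integers and let $\Sigma = \{0,1,\dots,q-1\}$. The number of words of length $2^n-1$ over $\Sigma$ that are $Z_n$ instances is exactly $q^n$.
   Context: Zimin words are defined recursively over an alphabet of variables $x_1, x_2, \dots$ by $Z_1 = x_1$ and $Z_{k+1} = Z_k\, x_{k+1}\, Z_k$; thus $Z_k$ has length $2^k-1$ and uses the $k$ distinct letters $x_1,\dots,x_k$ (e.g. $Z_2 = x_1x_2x_1$, $Z_3 = x_1x_2x_1x_3x_1x_2x_1$). A word $W$ over $\Sigma$ is an instance of a word $V$ (a ''$V$ instance'') if there is a non-erasing monoid homomorphism $\phi$ from words over the letters of $V$ to $\Sigma^+$ (i.e. every letter is sent to a nonempty word) with $\phi(V) = W$. *)

(* Defs.v *)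
From mathcomp Require Import all_boot.
Set Implicit Arguments. Unset Strict Implicit. Unset Printing Implicit Defensive.

(* Variables x_1, x_2, ... are encoded as natural numbers 0, 1, ...
   (x_i is encoded as i-1). *)

Fixpoint zimin (k : nat) : seq nat :=
  match k with
  | 0 => [::]
  | k'.+1 => zimin k' ++ [:: k'] ++ zimin k'
  end.

(* A homomorphism is determined by its values on letters, so we quantify over
   letter assignments phi : nat -> seq T, nonempty on every letter of V. *)
Definition is_instance (T : Type) (V : seq nat) (W : seq T) : Prop :=
  exists phi : nat -> seq T,
    (forall x, x \in V -> phi x <> [::]) /\ flatten (map phi V) = W.

(* Main.v *)
Require Import Defs.
From mathcomp Require Import all_boot.
From mathcomp Require Import zify.

Lemma size_zimin n : (size (zimin n)).+1 = 2 ^ n.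
Proof.
elim: n => [|n IH] //=.
rewrite size_cat /= expnS. lia.
Qed.

Lemma mem_zimin n x : (x \in zimin n) = (x < n).
Proof.
elim: n => [|n IH] //=.
rewrite mem_cat inE IH. case: ltngtP => //=; lia.
Qed.

Lemma flat_size (T : Type) (phi : nat -> seq T) (V : seq nat) :
  (forall x, x \in V -> phi x <> [::]) ->
  size V <= size (flatten (map phi V)) /\
  (size (flatten (map phi V)) = size V -> forall x, x \in V -> size (phi x) = 1).
Proof.
elim: V => [|a V IH] H /=; first by split.
have [H1 H2] : size V <= size (flatten (map phi V)) /\
  (size (flatten (map phi V)) = size V -> forall x, x \in V -> size (phi x) = 1).
  by apply: IH => x Hx; apply: H; rewrite inE Hx orbT.
have Ha : 0 < size (phi a).
  case E: (phi a) => //. by have := H a; rewrite inE eqxx E => /(_ isT).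
rewrite size_cat; split; first lia.
move=> Heq x; rewrite inE => /orP [/eqP -> | Hx]; first lia.
apply: H2 => //; lia.
Qed.

Theorem lemma1 (q n : nat) (hq : 2 <= q) (hn : 1 <= n) :
  exists s : seq (seq 'I_q),
    [/\ uniq s,
        (forall w : seq 'I_q,
            w \in s <-> (size w = 2 ^ n - 1 /\ is_instance (zimin n) w))
      & size s = q ^ n].
Proof.
case: q hq => [|q] // hq.
pose x0 : 'I_q.+1 := ord0.
pose build (t : n.-tuple 'I_q.+1) := map (fun x => nth x0 t x) (zimin n).
have binj : injective build.
  move=> t t' E; apply: eq_from_tnth => i.
  have Hi : nat_of_ord i \in zimin n by rewrite mem_zimin.
  have := congr1 (fun w => nth x0 w (index (nat_of_ord i) (zimin n))) E.
  rewrite /build !(nth_map 0) ?index_mem // nth_index //.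
  by rewrite !(tnth_nth x0).
exists (map build (enum {: n.-tuple 'I_q.+1})); split.
- by rewrite map_inj_uniq // enum_uniq.
- move=> w; split.
  + move=> /mapP [t _ ->]; split.
      by rewrite size_map; have := size_zimin n; lia.
    exists (fun x => [:: nth x0 t x]); split => //.
    by rewrite flatten_map1.
  + move=> [Hs [phi [Hne Hf]]].
    have [_ H2] := @flat_size _ phi _ Hne.
    have H1 : forall x, x \in zimin n -> size (phi x) = 1.
      apply: H2; rewrite Hf Hs; have := size_zimin n; lia.
    apply/mapP; exists (mktuple (fun i : 'I_n => head x0 (phi i))); first by rewrite mem_enum.
    rewrite -Hf /build -[RHS]flatten_map1; congr flatten; apply/eq_in_map => x Hx.
    have Hxn : x < n by rewrite -mem_zimin.
    have := H1 x Hx.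
    rewrite (_ : x = nat_of_ord (Ordinal Hxn)) // nth_mktuple /=.
    by case: (phi x) => [|a [|]].
- by rewrite size_map -cardE card_tuple card_ord.
Qed.
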